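(* Let $A=\{a_1,\dots,a_n\}$ and $L\subseteq a_1^*\cdots a_n^*$. Let $T=\{(a_1^{k_1}\cdots a_n^{k_n},\ a_1^{2k_1}\cdots a_n^{2k_n})\mid k_1,\dots,k_n\ge0\}$, $T(\downarrow L)=\{w\mid \exists v\in\downarrow L,\ (v,w)\in T\}$, and $K=\{a_1^{2k_1+1}\cdots a_n^{2k_n+1}\mid k_1,\dots,k_n\ge0\}$. Then $T(\downarrow L)$ and $K$ are not separable by a piecewise testable language if and only if $\downarrow L=a_1^*\cdots a_n^*$.
   Context: $\downarrow L$ denotes the set of all subsequences of words of $L$. A piecewise testable language is a finite Boolean combination of languages $A^*c_1A^*\cdots A^*c_kA^*$; two languages are separable by PTL if some piecewise testable $S$ contains the first and is disjoint from the second. *)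

(* Defs.v *)
(* Alphabet A = {a_1,...,a_n} is modelled as 'I_n
   (a_i = the ordinal i-1, letters ordered by the ordinal order). *)
From mathcomp Require Import all_boot.
Set Implicit Arguments. Unset Strict Implicit. Unset Printing Implicit Defensive.

Definition word (n : nat) := seq 'I_n.
Definition lang (n : nat) := word n -> Prop.

Definition blockw (n : nat) (k : 'I_n -> nat) : word n :=
  flatten [seq nseq (k i) i | i <- enum 'I_n].

Definition blocks (n : nat) : lang n := fun w => exists k, w = blockw k.

Definition down (n : nat) (L : lang n) : lang n :=
  fun u => exists w, L w /\ subseq u w.

Definition Timage (n : nat) (L' : lang n) : lang n :=
  fun w => exists k : 'I_n -> nat, L' (blockw k) /\ w = blockw (fun i => 2 * k i).

Definition Klang (n : nat) : lang n :=
  fun w => exists k : 'I_n -> nat, w = blockw (fun i => (2 * k i).+1).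

(* Finite Boolean combinations of the languages A^* c_1 A^* ... A^* c_k A^* *)
Inductive ptl_expr (n : nat) : Type :=
| PAtom of word n
| PNot of ptl_expr n
| PAnd of ptl_expr n & ptl_expr n
| POr of ptl_expr n & ptl_expr n.

Fixpoint ptl_mem (n : nat) (e : ptl_expr n) (w : word n) : bool :=
  match e with
  | PAtom c => subseq c w
  | PNot e1 => ~~ ptl_mem e1 w
  | PAnd e1 e2 => ptl_mem e1 w && ptl_mem e2 w
  | POr e1 e2 => ptl_mem e1 w || ptl_mem e2 w
  end.

Definition ptl_separable (n : nat) (L1 L2 : lang n) : Prop :=
  exists e : ptl_expr n,
    (forall w, L1 w -> ptl_mem e w) /\ (forall w, L2 w -> ~~ ptl_mem e w).

(* Main.v *)
Require Import Defs.
From mathcomp Require Import all_boot.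
From mathcomp Require Import zify.
From Stdlib Require Import Classical.
Set Implicit Arguments. Unset Strict Implicit. Unset Printing Implicit Defensive.

Definition bw (T : eqType) (s : seq T) (k : T -> nat) : seq T :=
  flatten [seq nseq (k i) i | i <- s].

Lemma split_nseq (T : eqType) (x : T) a r u :
  subseq u (nseq a x ++ r) ->
  exists b u2, [/\ b <= a, u = nseq b x ++ u2 & subseq u2 r].
Proof.
elim: a u => [|a IH] u /=.
  by move=> h; exists 0, u; split.
case: u => [|y u'] h.
  by exists 0, [::]; split => //; exact: sub0seq.
move: h => /=; case: eqP => [->|ne] h.
  have [b [u2 [hb -> h2]]] := IH _ h.
  by exists b.+1, u2; split.
have [b [u2 [hb e h2]]] := IH _ h.
by exists b, u2; split => //; apply: leqW.
Qed.

Lemma nseq_sub (T : eqType) (x : T) a b : a <= b -> subseq (nseq a x) (nseq b x).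
Proof. by move=> h; rewrite -(subnKC h) nseqD prefix_subseq. Qed.

Lemma bw_mono (T : eqType) (s : seq T) k j :
  (forall i, k i <= j i) -> subseq (bw s k) (bw s j).
Proof.
move=> h; elim: s => //= x s IH; apply: cat_subseq => //; exact: nseq_sub.
Qed.

Lemma bw_sub (T : eqType) (s : seq T) k u :
  uniq s -> subseq u (bw s k) -> exists j, u = bw s j.
Proof.
elim: s u => [|x s IH] u; rewrite /bw /=.
  by move=> _ /eqP ->; exists k.
case/andP=> xs us /split_nseq [b [u2 [_ -> h2]]].
have [j ->] := IH _ us h2.
exists (fun y => if y == x then b else j y).
rewrite /bw /= eqxx; congr (_ ++ flatten _); apply/eq_in_map => y ys /=.
have -> // : (y == x) = false.
by apply/eqP => e; move: xs; rewrite -e ys.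
Qed.

Lemma bw_trunc (T : eqType) (s : seq T) M p q c :
  (forall i, M <= q i) -> size c <= M -> subseq c (bw s p) -> subseq c (bw s q).
Proof.
move=> hq; elim: s c => [|x s IH] c hc; rewrite /bw //=.
move/split_nseq => [b [u2 [hb ec h2]]]; subst c.
move: hc; rewrite size_cat size_nseq => hc.
apply: cat_subseq; last by apply: IH => //; lia.
apply: nseq_sub; have := hq x; lia.
Qed.

Lemma count_bw (T : eqType) (s : seq T) k y :
  uniq s -> count_mem y (bw s k) = if y \in s then k y else 0.
Proof.
rewrite /bw; elim: s => //= x s IH /andP[xs us]; rewrite count_cat count_nseq IH // in_cons.
case: (eqVneq y x) => [->|ne] /=.
  by rewrite eqxx (negbTE xs) mul1n addn0.
by rewrite eq_sym (negbTE ne) mul0n add0n.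
Qed.

Lemma sub_nseq_count (T : eqType) (x : T) e w :
  subseq (nseq e x) w = (e <= count_mem x w).
Proof.
elim: w e => [|y w IH] [|e] //=.
case: (eqVneq x y) => [_|ne] /=.
  by rewrite IH add1n.
by rewrite (IH e.+1) add0n.
Qed.

Lemma count_blockw n (k : 'I_n -> nat) i : count_mem i (blockw k) = k i.
Proof.
have hh : i \in enum 'I_n by rewrite mem_enum.
rewrite /blockw (count_bw _ _ (enum_uniq _)); case: ifP => // hn.
by exfalso; move: hn => /negbT /negP; apply; exact: hh.
Qed.

Fixpoint msize (n : nat) (e : ptl_expr n) : nat :=
  match e with
  | PAtom c => size c
  | PNot e1 => msize e1
  | PAnd e1 e2 => maxn (msize e1) (msize e2)
  | POr e1 e2 => maxn (msize e1) (msize e2)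
  end.

Lemma mem_agree n (e : ptl_expr n) u v M :
  msize e <= M -> (forall c, size c <= M -> subseq c u = subseq c v) ->
  ptl_mem e u = ptl_mem e v.
Proof.
move=> hM h; elim: e hM => [c|e IH|e1 IH1 e2 IH2|e1 IH1 e2 IH2] /=.
- exact: h.
- by move=> /IH ->.
- by rewrite geq_max => /andP[/IH1 -> /IH2 ->].
- by rewrite geq_max => /andP[/IH1 -> /IH2 ->].
Qed.

Fixpoint por_list (n : nat) (l : seq (ptl_expr n)) : ptl_expr n :=
  match l with
  | [::] => PNot (PAtom [::])
  | e :: l' => POr e (por_list l')
  end.

Lemma mem_por n (l : seq (ptl_expr n)) w :
  ptl_mem (por_list l) w = has (fun e => ptl_mem e w) l.
Proof. by elim: l => [|e l /= ->] /=; rewrite ?sub0seq. Qed.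

Definition Dexp n (i : 'I_n) (t : nat) : ptl_expr n :=
  PAnd (PAtom (nseq (2 * t) i)) (PNot (PAtom (nseq (2 * t).+1 i))).

Lemma mem_Dexp n (i : 'I_n) t w : ptl_mem (Dexp i t) w = (count_mem i w == 2 * t).
Proof.
rewrite /Dexp /= -[i :: nseq _ _]/(nseq (2 * t).+1 i) !sub_nseq_count.
by rewrite eqn_leq andbC -ltnNge.
Qed.
Arguments Dexp : simpl never.

Theorem mainTheorem9 (n : nat) (L : lang n)
  (hL : forall w, L w -> blocks w) :
  ~ ptl_separable (Timage (down L)) (@Klang n) <->
  (forall w, down L w <-> blocks w).
Proof.
split; last first.
  move=> hd [e [h1 h2]].
  set M := msize e.
  have hu : ptl_mem e (blockw (fun _ : 'I_n => 2 * M)).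
    apply: h1; exists (fun _ => M); split => //.
    by apply/hd; exists (fun _ => M).
  have hv : ~~ ptl_mem e (blockw (fun _ : 'I_n => (2 * M).+1)).
    by apply: h2; exists (fun _ => M).
  rewrite (@mem_agree _ e _ (blockw (fun _ : 'I_n => (2 * M).+1)) M (leqnn M)) in hu.
    by rewrite hu in hv.
  move=> c hc; apply/idP/idP => hs.
    apply: subseq_trans hs _; exact: bw_mono.
  apply: (@bw_trunc _ _ M (fun _ => (2 * M).+1)) => //= i; lia.
move=> hns w; split.
  case=> w' [/hL [k ->]] hs.
  have [j ->] := @bw_sub _ _ k w (enum_uniq _) hs.
  by exists j.
case=> k0 ->; apply: NNPP => hnd; apply: hns.
exists (por_list [seq Dexp p.1 p.2 | p <- [seq (i, t) | i <- enum 'I_n, t <- iota 0 (k0 i)]]).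
split.
  move=> w1 [j [hdj ->]].
  have [i hi] : exists i, j i < k0 i.
    case: (boolP [exists i, j i < k0 i]) => [/existsP //|/existsPn hall].
    exfalso; apply: hnd; case: hdj => w' [hw' hs]; exists w'; split => //.
    apply: subseq_trans hs; apply: bw_mono => i; by rewrite leqNgt hall.
  rewrite mem_por has_map; apply/hasP; exists (i, j i).
    apply/allpairsPdep; exists i, (j i) => /=; split => //.
      have hh : i \in enum 'I_n by rewrite mem_enum. exact: hh.
    by rewrite mem_iota add0n.
  by rewrite /= -[_ && _]/(ptl_mem (Dexp i (j i)) _) mem_Dexp count_blockw.
move=> w1 [k ->].
rewrite mem_por has_map; apply/hasP => -[p hp].
rewrite /= -[_ && _]/(ptl_mem (Dexp p.1 p.2) _) mem_Dexp count_blockw => /eqP; lia.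
Qed.
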